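(* Let $Q_2 = \{m^2 : m \in \mathbb{N}\}$, $Q_3 = \{m^3 : m \in \mathbb{N}\}$, and for integers $a \geq 2$ and $i \in \{0,\ldots,a-1\}$ let $\mathbb{M}_{a,i} = \{n \in \mathbb{N} : n \bmod a = i\}$. Then: (a) $\mathrm{cnum}(F) < \mathrm{cnum}(\mathbb{S})$ for every finite $F \subseteq \mathbb{N}$; (b) $\mathrm{cnum}(Q_3) < \mathrm{cnum}(\mathbb{S}) < \mathrm{cnum}(\mathbb{N})$; (c) $\mathrm{cnum}(\mathbb{S})$ and $\mathrm{cnum}(Q_2)$ are incomparable: neither $\mathrm{cnum}(\mathbb{S}) \leq \mathrm{cnum}(Q_2)$ nor $\mathrm{cnum}(Q_2) \leq \mathrm{cnum}(\mathbb{S})$; (d) for every $a \geq 2$ and $i \in \{0,\ldots,a-1\}$, $\mathrm{cnum}(\mathbb{S})$ and $\mathrm{cnum}(\mathbb{M}_{a,i})$ are incomparable in the same sense. In particular the order $\leq$ on $\mathcal{S}/\mathcal{F}$ is not total on the c-numerosities of subsets of $\mathbb{N}$.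
   Context: $\mathbb{N} = \{1,2,3,\ldots\}$; for $S \subseteq \mathbb{N}$, $f_n(S) = |S \cap \{1,\ldots,n\}|$. The set $\mathbb{S}$ is defined by: $n \in \mathbb{S}$ iff $n \geq 2$ and $\lceil \log_2(\log_2 n)\rceil$ is odd (equivalently, the union of the intervals $\{m : 2^{(2^{k-1})} < m \leq 2^{(2^k)}\}$ over odd $k\geq 1$). $\mathcal{S}/\mathcal{F}$ is the set of sequences of non-negative integers modulo $(x_n)\sim(y_n)$ iff $x_n=y_n$ for all but finitely many $n$, with $[x] \leq [y]$ iff $x_n \leq y_n$ for all but finitely many $n$, and $[x] < [y]$ iff $x_n < y_n$ for all but finitely many $n$. $\mathrm{cnum}(S) = [(f_n(S))_n]$. *)

(* Defs.v *)
From mathcomp Require Import all_boot.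
Set Implicit Arguments. Unset Strict Implicit. Unset Printing Implicit Defensive.

(* Subsets of N = {1,2,...} are represented as boolean predicates on nat;
   the value at 0 is irrelevant since f_n only counts 1..n. *)
Definition nset := nat -> bool.

Definition fcount (S : nset) (n : nat) : nat := count S (iota 1 n).

Definition cnum (S : nset) : nat -> nat := fun n => fcount S n.

(* The order on S/F : [x] <= [y] iff x_n <= y_n for all but finitely many n;
   [x] < [y] iff x_n < y_n for all but finitely many n.
   (Both are independent of the representatives.) *)
Definition sf_le (x y : nat -> nat) : Prop := exists N, forall n, N <= n -> x n <= y n.
Definition sf_lt (x y : nat -> nat) : Prop := exists N, forall n, N <= n -> x n < y n.

(* The set S: union over odd k >= 1 of {m : 2^(2^(k-1)) < m <= 2^(2^k)};
   the witness k can be bounded by m since 2^(2^(k-1)) < m forces k <= m. *)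
Definition bbS : nset := fun m =>
  [exists k : 'I_m.+1, odd k && (2 ^ (2 ^ k.-1) < m <= 2 ^ (2 ^ k))].

Definition natset : nset := fun m => 0 < m.

Definition Q2 : nset := fun n => [exists m : 'I_n.+1, (0 < m) && (m ^ 2 == n)].
Definition Q3 : nset := fun n => [exists m : 'I_n.+1, (0 < m) && (m ^ 3 == n)].

Definition Mset (a i : nat) : nset := fun n => (0 < n) && (n %% a == i).

Definition finite_nset (F : nset) : Prop := exists N, forall n, F n -> n < N.

Definition incomparable (x y : nat -> nat) : Prop := ~ sf_le x y /\ ~ sf_le y x.

(* Main.v *)
Require Import Defs.
From mathcomp Require Import all_boot zify.

Definition e (k : nat) := 2 ^ (2 ^ k).

Lemma eS k : e k.+1 = e k * e k.
Proof. by rewrite /e expnS mulnC expnM expnS expn1. Qed.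

Lemma e_mono a b : (e a < e b) = (a < b).
Proof. by rewrite /e !ltn_exp2l. Qed.

Lemma e_gt k : k < e k.
Proof.
have h1 := ltn_expl k (isT : 1 < 2).
have h2 := ltn_expl (2 ^ k) (isT : 1 < 2).
rewrite /e; lia.
Qed.

Lemma e_ge2 k : 2 <= e k.
Proof. rewrite /e; have := expn_gt0 2 k; case: (2 ^ k) => // j _; rewrite expnS; have := expn_gt0 2 j; lia. Qed.

Lemma inS k m : odd k -> e k.-1 < m <= e k -> bbS m.
Proof.
move=> ho /andP[h1 h2].
have hk : k < m.+1.
  have := e_gt k.-1; case: k ho h1 h2 => //= k _ h1 h2; lia.
apply/existsP; exists (Ordinal hk) => /=. by rewrite ho h1 h2.
Qed.

Lemma notinS k m : ~~ odd k -> 0 < k -> e k.-1 < m <= e k -> ~~ bbS m.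
Proof.
move=> he hk /andP[h1 h2]; apply/negP => /existsP[[j hj]] /= /andP[ho /andP[h3 h4]].
have a1 : e j.-1 < e k by rewrite /e in h1 h2 *; lia.
have a2 : e k.-1 < e j by rewrite /e in h1 h2 *; lia.
rewrite e_mono in a1; rewrite e_mono in a2.
have : j = k by case: j ho a1 a2 {hj h3 h4} => //= j _; case: k he hk h1 h2 => //=; lia.
by move=> ejk; move: ho he; rewrite ejk => ->.
Qed.

Lemma notS1 : ~~ bbS 1.
Proof. by apply/negP => /existsP[[j hj]] /= /andP[_ /andP[h _]]; have := e_ge2 j.-1; lia. Qed.

Lemma locate m : 3 <= m -> exists k, 0 < k /\ e k.-1 < m <= e k.
Proof.
elim: m => // n IH h.
case: (ltngtP n 2) => hn; first lia.
  have /IH [k [hk /andP[h1 h2]]] : 3 <= n by lia.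
  case: (ltnP n (e k)) => h3.
    by exists k; split => //; apply/andP; split; lia.
  exists k.+1; split => //=; rewrite eS; have := e_ge2 k.
  have -> : n = e k by lia.
  move=> h4; apply/andP; split; nia.
exists 1; rewrite hn; split => //.
Qed.

Lemma fcountD S m d : fcount S (m + d) = fcount S m + count S (iota m.+1 d).
Proof. by rewrite /fcount iotaD count_cat add1n. Qed.

Lemma fcountS S n : fcount S n.+1 = fcount S n + S n.+1.
Proof. by rewrite -[in LHS]addn1 fcountD /= addn0. Qed.

Lemma fcount_mono S m n : m <= n -> fcount S m <= fcount S n.
Proof. by move=> h; rewrite -(subnKC h) fcountD leq_addr. Qed.

Lemma fcount_le S n : fcount S n <= n.
Proof. by rewrite /fcount; have := count_size S (iota 1 n); rewrite size_iota. Qed.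

Lemma count_all (S : nset) m d : (forall x, m < x <= m + d -> S x) -> count S (iota m.+1 d) = d.
Proof.
move=> h; have : all S (iota m.+1 d).
  by apply/allP => x; rewrite mem_iota => hx; apply: h; lia.
by rewrite all_count size_iota => /eqP.
Qed.

Lemma count_none (S : nset) m d : (forall x, m < x <= m + d -> ~~ S x) -> count S (iota m.+1 d) = 0.
Proof.
move=> h; apply/eqP; rewrite -leqn0 leqNgt -has_count; apply/hasPn => x.
by rewrite mem_iota => hx; apply: h; lia.
Qed.

Lemma blockS k : odd k -> e k - e k.-1 <= fcount bbS (e k).
Proof.
move=> ho; have hle : e k.-1 <= e k.
  by case: k ho => //= k _; rewrite eS; have := e_ge2 k; nia.
rewrite -{2}(subnKC hle) fcountD count_all ?leq_addl // => x hx.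
by apply: (inS _ _ ho); rewrite (subnKC hle) in hx.
Qed.

Lemma gapS k : ~~ odd k -> 0 < k -> fcount bbS (e k) = fcount bbS (e k.-1).
Proof.
move=> he hk; have hle : e k.-1 <= e k.
  by case: k he hk => //= k _ _; rewrite eS; have := e_ge2 k; nia.
rewrite -{1}(subnKC hle) fcountD count_none ?addn0 // => x hx.
by apply: (notinS _ _ he hk); rewrite (subnKC hle) in hx.
Qed.

Lemma fcountS_lt n : 0 < n -> fcount bbS n < n.
Proof.
case: n => // n _; rewrite /fcount /= (negbTE notS1) /=.
by have := count_size bbS (iota 2 n); rewrite size_iota; lia.
Qed.

Lemma sq_bound n : 3 <= n -> n <= 4 * fcount bbS n ^ 2.
Proof.
elim: n => // n IH h.
case: (ltngtP n 2) => hn; first lia.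
  have {}IH := IH hn.
  rewrite fcountS; case hS: (bbS n.+1) => /=.
    by move: IH; set s := fcount bbS n; nia.
  have [k [hk /andP[h1 h2]]] := locate _ h.
  have he : ~~ odd k by apply/negP => ho; move: hS; rewrite (inS _ _ ho) //; lia.
  case: k hk he h1 h2 => // [[|k]] //= _ ho h1 h2.
  have ho1 : odd k.+1 by move: ho; rewrite /= !negbK.
  have b1 := blockS k.+1 ho1; rewrite /= in b1.
  have b2 : fcount bbS (e k.+1) <= fcount bbS n by apply: fcount_mono; lia.
  rewrite eS in h2; have hEF := eS k; have hF := e_ge2 k.
  move: b1 b2 h2 hEF hF; rewrite ?addn0; set s := fcount bbS n.
  move: (e k.+1) (e k) => E F b1 b2 h2 hEF hF.
  have hE : E <= 2 * s by nia.
  have : E * E <= (2 * s) * (2 * s) by apply: leq_mul.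
  nia.
rewrite hn fcountS /= (@inS 1 3) //; rewrite /e /=; lia.
Qed.

Definition Qp (p : nat) : nset := fun n => [exists m : 'I_n.+1, (0 < m) && (m ^ p == n)].

Lemma leq_pow m p : 0 < m -> 0 < p -> m <= m ^ p.
Proof.
move=> hm; case: p => // p _; rewrite expnS.
by rewrite leq_pmulr // expn_gt0 hm.
Qed.

Lemma powcount p n : 0 < p ->
  fcount (Qp p) n ^ p <= n < (fcount (Qp p) n).+1 ^ p.
Proof.
move=> hp; elim: n => [|n IH].
  by rewrite /fcount /= exp0n // exp1n.
move: IH; rewrite fcountS; set c := fcount (Qp p) n => /andP[h1 h2].
case: (eqVneq n.+1 (c.+1 ^ p)) => heq.
  have hq : Qp p n.+1.
    have hc : c.+1 < n.+2 by have := leq_pow c.+1 p isT hp; lia.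
    by apply/existsP; exists (Ordinal hc) => /=; rewrite heq eqxx.
  rewrite hq /= addn1 -heq leqnn /= heq ltn_exp2r //.
have hq : ~~ Qp p n.+1.
  apply/negP => /existsP[[m hm]] /= /andP[m0 /eqP hmp].
  have a1 : c ^ p < m ^ p by lia.
  have a2 : m ^ p < c.+1 ^ p by lia.
  rewrite ltn_exp2r // in a1; rewrite ltn_exp2r // in a2; lia.
rewrite (negbTE hq) /= addn0; apply/andP; split; lia.
Qed.

Lemma count_mod_shift a i s : 0 < a ->
  count (fun x => x %% a == i) (iota s a) = count (fun x => x %% a == i) (iota 0 a).
Proof.
move=> ha; elim: s => // s IH; rewrite -IH.
case: a ha {IH} => // a _.
have -> : iota s.+1 a.+1 = iota s.+1 a ++ [:: s.+1 + a] by rewrite -[a.+1]addn1 iotaD.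
rewrite count_cat /= addn0.
have -> : s.+1 + a = s + a.+1 by lia.
by rewrite modnDr addnC.
Qed.

Lemma count_mod0 a i : i < a -> count (fun x => x %% a == i) (iota 0 a) = 1.
Proof.
move=> hi.
rewrite (@eq_in_count _ _ (pred1 i)); last first.
  by move=> x; rewrite mem_iota add0n => hx /=; rewrite modn_small.
by rewrite count_uniq_mem ?iota_uniq // mem_iota hi.
Qed.

Lemma fcountM_mul a i q : i < a -> fcount (Mset a i) (q * a) = q.
Proof.
move=> hi; have ha : 0 < a by lia.
elim: q => [|q IH]; first by rewrite mul0n.
rewrite mulSn addnC fcountD IH.
rewrite (@eq_in_count _ _ (fun x => x %% a == i)); last first.
  by move=> x; rewrite mem_iota => hx; rewrite /Mset; have -> : 0 < x by lia.
by rewrite count_mod_shift // count_mod0 // addn1.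
Qed.

Lemma fcountM_bounds a i n : i < a ->
  n %/ a <= fcount (Mset a i) n <= (n %/ a).+1.
Proof.
move=> hi; have ha : 0 < a by lia.
apply/andP; split.
  rewrite -{1}(fcountM_mul a i (n %/ a) hi); apply: fcount_mono; exact: leq_divM.
rewrite -{1}(fcountM_mul a i (n %/ a).+1 hi); apply: fcount_mono.
by apply: ltnW; apply: ltn_ceil.
Qed.

Lemma Q2count n : fcount Q2 n ^ 2 <= n < (fcount Q2 n).+1 ^ 2.
Proof. exact: (powcount 2 n isT). Qed.
Lemma Q3count n : fcount Q3 n ^ 3 <= n < (fcount Q3 n).+1 ^ 3.
Proof. exact: (powcount 3 n isT). Qed.

Lemma e1 : e 1 = 4. Proof. by []. Qed.

Lemma odd_big N : exists E, N <= E * E /\ 4 < E /\ E * E - E <= fcount bbS (E * E).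
Proof.
exists (e N.*2.+2); rewrite -eS; split; first by have := e_gt N.*2.+3; lia.
split; first by rewrite -e1 e_mono.
have := blockS N.*2.+3; rewrite /= odd_double /= eS; by apply.
Qed.

Lemma even_big N : exists E, N <= E * E /\ N <= E /\ fcount bbS (E * E) < E.
Proof.
exists (e N.*2.+1); rewrite -eS; split; first by have := e_gt N.*2.+2; lia.
split; first by have := e_gt N.*2.+1; lia.
rewrite (gapS N.*2.+2) /= ?odd_double //; apply: fcountS_lt; have := e_ge2 N.*2.+1; lia.
Qed.

Theorem mainTheorem9 :
  (forall F : nset, finite_nset F -> sf_lt (cnum F) (cnum bbS)) /\
  (sf_lt (cnum Q3) (cnum bbS) /\ sf_lt (cnum bbS) (cnum natset)) /\
  incomparable (cnum bbS) (cnum Q2) /\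
  (forall a i : nat, 2 <= a -> i < a -> incomparable (cnum bbS) (cnum (Mset a i))) /\
  (exists A B : nset, incomparable (cnum A) (cnum B)).
Proof.
have incQ2 : incomparable (cnum bbS) (cnum Q2).
  split.
    move=> [N H]; have [E [hN [h4 hs]]] := odd_big N.
    have := H _ hN; rewrite /cnum; have := Q2count (E * E).
    set q := fcount Q2 (E * E) => /andP[hq _] hsq.
    have : q <= E by nia.
    nia.
  move=> [N H]; have [E [hN [_ hs]]] := even_big N.
  have := H _ hN; rewrite /cnum; have := Q2count (E * E).
  set q := fcount Q2 (E * E) => /andP[_ hq] hsq.
  have : E <= q by nia.
  lia.
split.
  move=> F [N HF]; exists (4 * N * N + N + 3) => n hn; rewrite /cnum.
  have hF : fcount F n <= N.
    have hNn : N <= n by lia.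
    rewrite -(subnKC hNn) fcountD count_none ?addn0 ?fcount_le // => x hx.
    by apply/negP => /HF; lia.
  have := sq_bound n; set s := fcount bbS n => hs.
  have {}hs : n <= 4 * s ^ 2 by apply: hs; lia.
  case: (ltnP N s) => hNs; first lia.
  have : s * s <= N * N by apply: leq_mul.
  nia.
split.
  split.
    exists 125 => n hn; rewrite /cnum.
    have := sq_bound n; have := Q3count n.
    set q := fcount Q3 n; set s := fcount bbS n => /andP[h1 h2] hs.
    have {}hs : n <= 4 * s ^ 2 by apply: hs; lia.
    have hq : 5 <= q.
      case: (ltnP q 5) => // hq.
      have : q.+1 ^ 3 <= 5 ^ 3 by rewrite leq_exp2r.
      lia.
    case: (ltnP q s) => // hsq.
    have : s * s <= q * q by apply: leq_mul.
    nia.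
  exists 1 => n hn; rewrite /cnum.
  have -> : fcount natset n = n.
    by rewrite -(add0n n) fcountD count_all // => x hx; rewrite /natset; lia.
  exact: fcountS_lt.
split; first exact: incQ2.
split; last by exists bbS, Q2.
move=> a i ha hi; split.
  move=> [N H]; have [E [hN [h4 hs]]] := odd_big N.
  have := H _ hN; rewrite /cnum; have := fcountM_bounds a i (E * E) hi.
  set m := fcount (Mset a i) (E * E) => /andP[_ hm] hsm.
  have h2 : E * E %/ a <= E * E %/ 2 by apply: leq_div2l.
  have h3 := leq_divM (E * E) 2.
  move: h2 h3; set t := E * E %/ a; set u := E * E %/ 2 => h2 h3.
  nia.
move=> [N H]; have [E [hN [hE hs]]] := even_big (N + a).
have hN' : N <= E * E by lia.
have := H _ hN'; rewrite /cnum; have := fcountM_bounds a i (E * E) hi.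
set m := fcount (Mset a i) (E * E) => /andP[hm _] hsm.
have : E * a %/ a <= E * E %/ a by apply: leq_div2r; apply: leq_mul; lia.
rewrite mulnK; last lia.
lia.
Qed.
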